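(* Let $(\mathcal{U},f,g,\preccurlyeq)$ be a fault-tolerance partially ordered $(m,n)$-semiring as described in the context, and let $x_1,\ldots,x_m,y_1,\ldots,y_n\in\mathcal{U}$ be disjoint components. Then (i) $x_i\preccurlyeq f(x_1,x_2,\ldots,x_m)$ for every $1\le i\le m$; (ii) $g(y_1,y_2,\ldots,y_n)\preccurlyeq y_j$ for every $1\le j\le n$.
   Context: Notation: $x_i^j$ denotes $x_i,\ldots,x_j$. $(\mathcal{U},f,g)$ is an $(m,n)$-semiring: $f$ is an associative $m$-ary and $g$ an associative $n$-ary operation on $\mathcal{U}$ (associativity of a $k$-ary $h$: $h(x_1^{i-1},h(x_i^{k+i-1}),x_{k+i}^{2k-1})=h(x_1^{j-1},h(x_j^{k+j-1}),x_{k+j}^{2k-1})$ for $1\le i\le j\le k$), and $g$ distributes over $f$ in every position. $\mathcal{U}$ is interpreted as a set of systems; $f(x_1^m)$ is the system that fails when any $x_i$ fails, $g(y_1^n)$ the system that fails only when all $y_j$ fail; elements are assumed to be disjoint components (failing independently), which imposes no further algebraic condition. $\mathbf{0}\in\mathcal{U}$ (the always-up system) is an $f$-identity ($f(\mathbf{0},\ldots,x,\ldots,\mathbf{0})=x$ in every position) and $\mathbf{1}$ (the always-down system) is a $g$-identity; moreover $g(y_1^{j-1},\mathbf{0},y_{j+1}^n)=\mathbf{0}$ and $f(x_1^{i-1},\mathbf{1},x_{i+1}^m)=\mathbf{1}$ for all arguments and positions. $\preccurlyeq$ is a partial order on $\mathcal{U}$ (''fault-tolerance partial order'') such that $(\mathcal{U},f,g,\preccurlyeq)$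 is a partially ordered $(m,n)$-semiring: $a\preccurlyeq b$ implies $f(x_1^{i-1},a,x_{i+1}^m)\preccurlyeq f(x_1^{i-1},b,x_{i+1}^m)$ and $g(y_1^{j-1},a,y_{j+1}^n)\preccurlyeq g(y_1^{j-1},b,y_{j+1}^n)$ for all arguments and all positions; and $\mathbf{0}\preccurlyeq a\preccurlyeq\mathbf{1}$ for all $a\in\mathcal{U}$. *)

(* Defs.v *)
From mathcomp Require Import all_boot.
Set Implicit Arguments. Unset Strict Implicit. Unset Printing Implicit Defensive.

(* A k-ary operation on U is represented as a function h : seq U -> U; only
   its values on sequences of length k are ever constrained or used.
   Positions are 0-based: position i here is position i+1 in the paper. *)

Section FT.
Variable U : Type.

Definition assoc_op (k : nat) (h : seq U -> U) : Prop :=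
  forall s : seq U, size s = (2 * k - 1)%N ->
  forall i j : nat, (i <= j)%N -> (j < k)%N ->
    h (take i s ++ h (take k (drop i s)) :: drop (i + k) s) =
    h (take j s ++ h (take k (drop j s)) :: drop (j + k) s).

Definition distrib_op (m n : nat) (f g : seq U -> U) : Prop :=
  forall (xs ys : seq U), size xs = m -> size ys = n ->
  forall j : nat, (j < n)%N ->
    g (set_nth (f xs) ys j (f xs)) = f [seq g (set_nth x ys j x) | x <- xs].

Record ft_po_semiring (m n : nat) (f g : seq U -> U) (le : U -> U -> Prop)
    (zero one : U) : Prop := {
  f_assoc : assoc_op m f;
  g_assoc : assoc_op n g;
  g_distr_f : distrib_op m n f g;
  zero_f_id : forall (x : U) (i : nat), (i < m)%N ->
      f (set_nth x (nseq m zero) i x) = x;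
  one_g_id : forall (y : U) (j : nat), (j < n)%N ->
      g (set_nth y (nseq n one) j y) = y;
  zero_g_abs : forall (ys : seq U) (j : nat), size ys = n -> (j < n)%N ->
      g (set_nth zero ys j zero) = zero;
  one_f_abs : forall (xs : seq U) (i : nat), size xs = m -> (i < m)%N ->
      f (set_nth one xs i one) = one;
  le_refl : forall a, le a a;
  le_antisym : forall a b, le a b -> le b a -> a = b;
  le_trans : forall a b c, le a b -> le b c -> le a c;
  f_mono : forall (xs : seq U) (i : nat) (a b : U), size xs = m -> (i < m)%N ->
      le a b -> le (f (set_nth a xs i a)) (f (set_nth b xs i b));
  g_mono : forall (ys : seq U) (j : nat) (a b : U), size ys = n -> (j < n)%N ->
      le a b -> le (g (set_nth a ys j a)) (g (set_nth b ys j b));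
  zero_bot : forall a, le zero a;
  one_top : forall a, le a one
}.
End FT.

(* Main.v *)
Require Import Defs.
From mathcomp Require Import all_boot.
Set Implicit Arguments.

Definition mk (U : Type) (d : U) (xs : seq U) (m i k : nat) : seq U :=
  [seq (if (j < k) || (j == i) then nth d xs j else d) | j <- iota 0 m].

Lemma size_mk (U : Type) (d : U) (xs : seq U) (m i k : nat) : size (mk d xs m i k) = m.
Proof. by rewrite /mk size_map size_iota. Qed.

Lemma nth_mk (U : Type) (d : U) (xs : seq U) (m i k j : nat) : (j < m)%N ->
  nth d (mk d xs m i k) j = if (j < k) || (j == i) then nth d xs j else d.
Proof. by move=> hj; rewrite /mk (nth_map 0) ?size_iota // nth_iota. Qed.

Lemma mk_eq (U : Type) (d : U) (xs ys : seq U) (m : nat) : size xs = m -> size ys = m ->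
  (forall j, (j < m)%N -> nth d xs j = nth d ys j) -> xs = ys.
Proof. by move=> h1 h2 h; apply: (eq_from_nth (x0:=d)); rewrite ?h1 ?h2 // => j; rewrite h1 => /h. Qed.

Lemma mk_step1 (U : Type) (d : U) (xs : seq U) (m i k : nat) : (k < m)%N ->
  set_nth d (mk d xs m i k) k (nth d (mk d xs m i k) k) = mk d xs m i k.
Proof.
move=> hk; apply: (@mk_eq _ d _ _ m); rewrite ?size_set_nth ?size_mk //.
  by apply/maxn_idPr.
by move=> j hj; rewrite nth_set_nth /=; case: eqP => // ->.
Qed.

Lemma mk_step2 (U : Type) (d : U) (xs : seq U) (m i k : nat) : (k < m)%N ->
  set_nth d (mk d xs m i k) k (nth d xs k) = mk d xs m i k.+1.
Proof.
move=> hk; apply: (@mk_eq _ d _ _ m); rewrite ?size_set_nth ?size_mk //.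
  by apply/maxn_idPr.
move=> j hj; rewrite nth_set_nth /= !nth_mk //; case: eqP => [->|/eqP ne].
  by rewrite ltnSn.
by rewrite ltnS [(j <= k)%N]leq_eqVlt (negbTE ne).
Qed.

Lemma mk_end (U : Type) (d : U) (xs : seq U) (m i : nat) : size xs = m -> mk d xs m i m = xs.
Proof.
move=> hs; apply: (@mk_eq _ d _ _ m); rewrite ?size_mk //.
by move=> j hj; rewrite nth_mk // hj.
Qed.

Lemma mk_start (U : Type) (d : U) (xs : seq U) (m i : nat) : (i < m)%N ->
  mk d xs m i 0 = set_nth d (nseq m d) i (nth d xs i).
Proof.
move=> hi; apply: (@mk_eq _ d _ _ m); rewrite ?size_mk ?size_set_nth ?size_nseq //.
  by apply/maxn_idPr.
move=> j hj; rewrite nth_mk // nth_set_nth /= nth_nseq hj.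
by case: eqP => [->|] //.
Qed.

Lemma set_nth_d (U : Type) (a b : U) (s : seq U) (i : nat) (y : U) :
  (i < size s)%N -> set_nth a s i y = set_nth b s i y.
Proof. by elim: s i => [|x s IH] [|i] //= hi; rewrite IH. Qed.

Theorem lemma3 (U : Type) (m n : nat) (f g : seq U -> U) (le : U -> U -> Prop)
    (zero one : U) :
  ft_po_semiring m n f g le zero one ->
  forall (xs ys : seq U), size xs = m -> size ys = n ->
  (forall i : nat, (i < m)%N -> le (nth zero xs i) (f xs)) /\
  (forall j : nat, (j < n)%N -> le (g ys) (nth zero ys j)).
Proof.
move=> H xs ys hx hy; split.
- move=> i hi.
  have step : forall k, (k <= m)%N -> le (nth zero xs i) (f (mk zero xs m i k)).
    elim=> [_|k IH hk].
      rewrite mk_start //.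
      have -> : set_nth zero (nseq m zero) i (nth zero xs i)
              = set_nth (nth zero xs i) (nseq m zero) i (nth zero xs i).
        by apply: set_nth_d; rewrite size_nseq.
      rewrite (zero_f_id H) //; exact: le_refl H _.
    apply: (le_trans H (IH (ltnW hk))).
    rewrite -(@mk_step2 _ zero xs _ i k hk).
    case: (boolP ((k < k) || (k == i))) => [c|c].
      have e : nth zero xs k = nth zero (mk zero xs m i k) k by rewrite nth_mk // c.
      rewrite e (@mk_step1 _ zero xs _ i k hk); exact: le_refl H _.
    have e : nth zero (mk zero xs m i k) k = zero by rewrite nth_mk // (negbTE c).
    rewrite -{1}(@mk_step1 _ zero xs _ i k hk) e.
    rewrite [X in le _ (f X)](@set_nth_d _ zero (nth zero xs k)) ?size_mk //.
    apply: (f_mono H) => //; first by rewrite size_mk.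
    exact: zero_bot H _.
  by have := step m (leqnn m); rewrite mk_end.
- move=> i hi.
  have step : forall k, (k <= n)%N -> le (g (mk one ys n i k)) (nth zero ys i).
    elim=> [_|k IH hk].
      rewrite mk_start //.
      have -> : set_nth one (nseq n one) i (nth one ys i)
              = set_nth (nth zero ys i) (nseq n one) i (nth zero ys i).
        rewrite (set_nth_default zero); last by rewrite hy.
        by apply: set_nth_d; rewrite size_nseq.
      rewrite (one_g_id H) //; exact: le_refl H _.
    apply: (le_trans H _ (IH (ltnW hk))).
    rewrite -(@mk_step2 _ one ys _ i k hk).
    case: (boolP ((k < k) || (k == i))) => [c|c].
      have e : nth one ys k = nth one (mk one ys n i k) k by rewrite nth_mk // c.
      rewrite e (@mk_step1 _ one ys _ i k hk); exact: le_refl H _.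
    have e : nth one (mk one ys n i k) k = one by rewrite nth_mk // (negbTE c).
    rewrite -{2}(@mk_step1 _ one ys _ i k hk) e.
    rewrite [X in le (g X) _](@set_nth_d _ one (nth one ys k)) ?size_mk //.
    apply: (g_mono H) => //; first by rewrite size_mk.
    exact: one_top H _.
  by have := step n (leqnn n); rewrite mk_end.
Qed.
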